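(* Let $\mathbf{A}\in\mathbb{C}^{M\times N_a}$, $\mathbf{B}\in\mathbb{C}^{M\times N_b}$ have unit-$\ell_2$-norm columns with coherence parameters $\mu_a,\mu_b,\mu_m$, and $\mathbf{D}=[\mathbf{A}\ \mathbf{B}]$. Let $\mathbf{h}=[\mathbf{h}_x^T\ \mathbf{h}_e^T]^T$ where $\mathbf{h}_x\in\mathbb{C}^{N_a}$ has at most $n_x\ge1$ nonzero entries and $\mathbf{h}_e\in\mathbb{C}^{N_b}$ has at most $n_e\ge1$ nonzero entries. Then $$(1-g)\|\mathbf{h}\|_2^2\le\|\mathbf{D}\mathbf{h}\|_2^2\le(1+g)\|\mathbf{h}\|_2^2,\qquad g=\max\{\mu_a(n_x-1),\mu_b(n_e-1)\}+\sqrt{n_xn_e}\,\mu_m.$$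
   Context: Coherence parameters: $\mu_a=\max_{k\ne\ell}|\mathbf{a}_k^H\mathbf{a}_\ell|$, $\mu_b=\max_{k\ne\ell}|\mathbf{b}_k^H\mathbf{b}_\ell|$, $\mu_m=\max_{k,\ell}|\mathbf{a}_k^H\mathbf{b}_\ell|$. *)

(* Defs.v *)
(* The complex field C is generalised to an arbitrary
   numClosedFieldType (algC is an instance); norms are real (nonneg) elements. *)
From HB Require Import structures.
From mathcomp Require Import all_boot all_order all_algebra.
Set Implicit Arguments. Unset Strict Implicit. Unset Printing Implicit Defensive.
Import Order.TTheory GRing.Theory Num.Theory.
Local Open Scope ring_scope.

Definition colinner (C : numClosedFieldType) (M na nb : nat)
  (A : 'M[C]_(M, na)) (B : 'M[C]_(M, nb)) (k : 'I_na) (l : 'I_nb) : C :=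
  \sum_(i < M) (A i k)^* * B i l.

Definition sqnorm (C : numClosedFieldType) (n : nat) (v : 'cV[C]_n) : C :=
  \sum_(i < n) `|v i 0| ^+ 2.

Definition unit_cols (C : numClosedFieldType) (M n : nat) (A : 'M[C]_(M, n)) : Prop :=
  forall k : 'I_n, sqnorm (col k A) = 1.

(* mu_a = max_{k <> l} |a_k^H a_l| (0 if there is no such pair) *)
Definition coh_self (C : numClosedFieldType) (M n : nat) (A : 'M[C]_(M, n)) : C :=
  \big[Num.max/0]_(k < n) \big[Num.max/0]_(l < n | l != k) `|colinner A A k l|.

Definition coh_mut (C : numClosedFieldType) (M na nb : nat)
  (A : 'M[C]_(M, na)) (B : 'M[C]_(M, nb)) : C :=
  \big[Num.max/0]_(k < na) \big[Num.max/0]_(l < nb) `|colinner A B k l|.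

Definition nnz (C : numClosedFieldType) (n : nat) (v : 'cV[C]_n) : nat :=
  #|[set i : 'I_n | v i 0 != 0]|.

(* Main.v *)
Require Import Defs.
From HB Require Import structures.
From mathcomp Require Import all_boot all_order all_algebra.
From mathcomp Require Import ring.
Import Order.TTheory GRing.Theory Num.Theory.
Set Implicit Arguments. Unset Strict Implicit.
Local Open Scope ring_scope.

Lemma max_l (C : numClosedFieldType) (x y : C) :
  x \is Num.real -> y \is Num.real -> x <= Num.max x y.
Proof. by move=> hx hy; case: (real_leP hx hy) => // _; exact: lexx. Qed.

Lemma max_r (C : numClosedFieldType) (x y : C) :
  x \is Num.real -> y \is Num.real -> y <= Num.max x y.
Proof. by move=> hx hy; case: (real_leP hx hy) => // /ltW. Qed.

Lemma max_ge0 (C : numClosedFieldType) (x y : C) :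
  0 <= x -> 0 <= y -> 0 <= Num.max x y.
Proof.
move=> hx hy; apply: (le_trans hx); exact: (max_l (ger0_real hx) (ger0_real hy)).
Qed.

Lemma bigmax_ge0 (C : numClosedFieldType) (I : finType) (P : pred I) (F : I -> C) :
  (forall i, P i -> 0 <= F i) -> 0 <= \big[Num.max/0]_(i | P i) F i.
Proof. move=> h; apply: (big_ind (fun x => 0 <= x)); [exact: lexx | exact: max_ge0 | exact: h]. Qed.

Lemma le_bigmax_seq (C : numClosedFieldType) (I : eqType) (r : seq I) (P : pred I) (F : I -> C) j :
  (forall i, P i -> 0 <= F i) -> P j -> j \in r -> F j <= \big[Num.max/0]_(i <- r | P i) F i.
Proof.
move=> h Pj; elim: r => [//|a r IH]; rewrite inE big_cons.
have hr : 0 <= \big[Num.max/0]_(i <- r | P i) F i.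
  by apply: (big_ind (fun x => 0 <= x)); [exact: lexx | exact: max_ge0 | exact: h].
case/orP => [/eqP <-|jr]; first by rewrite Pj; exact: (max_l (ger0_real (h _ Pj)) (ger0_real hr)).
case: (P a) (h a) => [ha|_]; last exact: IH.
apply: le_trans (IH jr) _; exact: (max_r (ger0_real (ha isT)) (ger0_real hr)).
Qed.

Lemma le_bigmax (C : numClosedFieldType) (I : finType) (P : pred I) (F : I -> C) j :
  (forall i, P i -> 0 <= F i) -> P j -> F j <= \big[Num.max/0]_(i | P i) F i.
Proof. by move=> h Pj; apply: le_bigmax_seq => //; rewrite mem_index_enum. Qed.

Lemma coh_self_ge0 (C : numClosedFieldType) M n (A : 'M[C]_(M, n)) : 0 <= coh_self A.
Proof. apply: bigmax_ge0 => k _; apply: bigmax_ge0 => l _; exact: normr_ge0. Qed.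

Lemma coh_self_le (C : numClosedFieldType) M n (A : 'M[C]_(M, n)) k l :
  l != k -> `|colinner A A k l| <= coh_self A.
Proof.
move=> lk.
have h1 := le_bigmax (P := fun l => l != k) (F := fun l => `|colinner A A k l|) (fun _ _ => normr_ge0 _) lk.
apply: (le_trans h1); rewrite /coh_self.
apply: (le_bigmax (P := predT) (F := fun k => \big[Num.max/0]_(l < n | l != k) `|colinner A A k l|)) => //.
by move=> i _; apply: bigmax_ge0 => *; exact: normr_ge0.
Qed.

Lemma coh_mut_ge0 (C : numClosedFieldType) M na nb (A : 'M[C]_(M, na)) (B : 'M[C]_(M, nb)) :
  0 <= coh_mut A B.
Proof. apply: bigmax_ge0 => k _; apply: bigmax_ge0 => l _; exact: normr_ge0. Qed.

Lemma coh_mut_le (C : numClosedFieldType) M na nb (A : 'M[C]_(M, na)) (B : 'M[C]_(M, nb)) k l :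
  `|colinner A B k l| <= coh_mut A B.
Proof.
have h1 := le_bigmax (P := predT) (F := fun l => `|colinner A B k l|) (fun _ _ => normr_ge0 _) (isT : predT l).
apply: (le_trans h1); rewrite /coh_mut.
apply: (le_bigmax (P := predT) (F := fun k => \big[Num.max/0]_(l < nb) `|colinner A B k l|)) => //.
by move=> i _; apply: bigmax_ge0 => *; exact: normr_ge0.
Qed.

Lemma gram (C : numClosedFieldType) M na nb (A : 'M[C]_(M, na)) (B : 'M[C]_(M, nb))
  (u : 'cV[C]_na) (v : 'cV[C]_nb) :
  \sum_(i < M) ((A *m u) i 0)^* * (B *m v) i 0 =
  \sum_(k < na) \sum_(l < nb) (u k 0)^* * v l 0 * colinner A B k l.
Proof.
under eq_bigr => i _ do rewrite !mxE rmorph_sum big_distrlr /=.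
rewrite exchange_big /=; apply: eq_bigr => k _.
rewrite exchange_big /=; apply: eq_bigr => l _.
rewrite /colinner mulr_sumr; apply: eq_bigr => i _; rewrite rmorphM /=; ring.
Qed.

Lemma sqnormE (C : numClosedFieldType) n (w : 'cV[C]_n) :
  sqnorm w = \sum_(i < n) (w i 0)^* * w i 0.
Proof. by apply: eq_bigr => i _; rewrite normCK mulrC. Qed.

Lemma sqnorm_ge0 (C : numClosedFieldType) n (w : 'cV[C]_n) : 0 <= sqnorm w.
Proof. by apply: sumr_ge0 => i _; rewrite exprn_ge0. Qed.

Definition absum (C : numClosedFieldType) n (u : 'cV[C]_n) := \sum_(k < n) `|u k 0|.

Lemma absum_ge0 (C : numClosedFieldType) n (u : 'cV[C]_n) : 0 <= absum u.
Proof. by apply: sumr_ge0 => i _. Qed.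

Lemma amgm (C : numClosedFieldType) (a b : C) :
  a \is Num.real -> b \is Num.real -> 2%:R * (a * b) <= a ^+ 2 + b ^+ 2.
Proof.
move=> ha hb; rewrite -subr_ge0.
have -> : a ^+ 2 + b ^+ 2 - 2%:R * (a * b) = (a - b) ^+ 2 by ring.
by apply: real_exprn_even_ge0 => //; rewrite rpredB.
Qed.

Lemma cs (C : numClosedFieldType) n (u : 'cV[C]_n) :
  absum u ^+ 2 <= (nnz u)%:R * sqnorm u.
Proof.
set S := [set i | u i 0 != 0].
pose x k := `|u k 0|.
have eA : absum u = \sum_(k in S) x k.
  rewrite /absum (bigID (fun k => k \in S)) /= [X in _ + X]big1 ?addr0 //.
  by move=> k; rewrite inE negbK => /eqP ->; rewrite normr0.
have eU : sqnorm u = \sum_(k in S) x k ^+ 2.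
  rewrite /sqnorm (bigID (fun k => k \in S)) /= [X in _ + X]big1 ?addr0 //.
  by move=> k; rewrite inE negbK => /eqP ->; rewrite normr0 expr0n.
rewrite eA eU /nnz -/S expr2 big_distrlr /=.
set U := \sum_(k in S) x k ^+ 2.
suff key : 2%:R * (\sum_(k in S) \sum_(l in S) x k * x l) <= 2%:R * (#|S|%:R * U).
  by rewrite ler_pM2l ?ltr0n in key.
have E : \sum_(k in S) \sum_(l in S) (x k ^+ 2 + x l ^+ 2) = 2%:R * (#|S|%:R * U).
  rewrite (eq_bigr (fun k => x k ^+ 2 *+ #|S| + U)); last first.
    by move=> k _; rewrite big_split /= sumr_const.
  by rewrite big_split /= sumr_const sumrMnl -/U !mulr_natl mulr2n.
rewrite -E mulr_sumr; apply: ler_sum => k _; rewrite mulr_sumr; apply: ler_sum => l _.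
by apply: amgm; apply: normr_real.
Qed.

Lemma block (C : numClosedFieldType) M n m (A : 'M[C]_(M, n)) (u : 'cV[C]_n) :
  unit_cols A -> (nnz u <= m)%N ->
  `| \sum_(k < n) \sum_(l < n) (u k 0)^* * u l 0 * colinner A A k l - sqnorm u |
    <= coh_self A * (m%:R - 1) * sqnorm u.
Proof.
move=> hA hm.
have diag k : colinner A A k k = 1.
  rewrite -(hA k) /sqnorm /colinner; apply: eq_bigr => i _; by rewrite !mxE normCK mulrC.
have E : \sum_(k < n) \sum_(l < n) (u k 0)^* * u l 0 * colinner A A k l - sqnorm u
    = \sum_(k < n) \sum_(l < n | l != k) (u k 0)^* * u l 0 * colinner A A k l.
  rewrite sqnormE -sumrB; apply: eq_bigr => k _.
  by rewrite (bigD1 k) //= diag mulr1 addrC addrK.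
have E2 : absum u ^+ 2 - sqnorm u
    = \sum_(k < n) \sum_(l < n | l != k) `|u k 0| * `|u l 0|.
  rewrite /absum expr2 big_distrlr /= /sqnorm -sumrB; apply: eq_bigr => k _.
  by rewrite (bigD1 k) //= -expr2 addrC addrK.
rewrite E; apply: (le_trans (ler_norm_sum _ _ _)).
apply: (@le_trans _ _ (coh_self A * (absum u ^+ 2 - sqnorm u))).
  rewrite E2 mulr_sumr; apply: ler_sum => k _.
  apply: (le_trans (ler_norm_sum _ _ _)); rewrite mulr_sumr; apply: ler_sum => l lk.
  rewrite !normrM norm_conjC [X in _ <= X]mulrC.
  apply: ler_wpM2l; first by rewrite mulr_ge0.
  exact: coh_self_le.
rewrite -mulrA; apply: ler_wpM2l; first exact: coh_self_ge0.
rewrite mulrBl mul1r lerD2r; apply: (le_trans (cs u)).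
by apply: ler_wpM2r; [exact: sqnorm_ge0 | rewrite ler_nat].
Qed.

Lemma cross (C : numClosedFieldType) M na nb (A : 'M[C]_(M, na)) (B : 'M[C]_(M, nb))
  (u : 'cV[C]_na) (v : 'cV[C]_nb) :
  `| \sum_(k < na) \sum_(l < nb) (u k 0)^* * v l 0 * colinner A B k l |
    <= coh_mut A B * (absum u * absum v).
Proof.
apply: (le_trans (ler_norm_sum _ _ _)).
rewrite /absum big_distrlr mulr_sumr; apply: ler_sum => k _.
apply: (le_trans (ler_norm_sum _ _ _)); rewrite mulr_sumr; apply: ler_sum => l _.
rewrite !normrM norm_conjC [X in _ <= X]mulrC.
apply: ler_wpM2l; first by rewrite mulr_ge0.
exact: coh_mut_le.
Qed.

Lemma pq (C : numClosedFieldType) (nx ne : nat) (P Q U V : C) :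
  (1 <= nx)%N -> (1 <= ne)%N -> 0 <= P -> 0 <= Q -> 0 <= U -> 0 <= V ->
  P ^+ 2 <= nx%:R * U -> Q ^+ 2 <= ne%:R * V ->
  2%:R * (P * Q) <= sqrtC ((nx * ne)%:R) * (U + V).
Proof.
move=> hnx hne hP hQ hU hV hPU hQV.
rewrite natrM sqrtCM ?nnegrE ?ler0n //.
set a := sqrtC nx%:R; set b := sqrtC ne%:R.
have a0 : 0 < a by rewrite sqrtC_gt0 ltr0n.
have b0 : 0 < b by rewrite sqrtC_gt0 ltr0n.
have ha : a ^+ 2 = nx%:R := sqrtCK _.
have hb : b ^+ 2 = ne%:R := sqrtCK _.
rewrite -(ler_pM2l (mulr_gt0 a0 b0)).
have -> : a * b * (2%:R * (P * Q)) = 2%:R * ((b * P) * (a * Q)) by ring.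
apply: (le_trans (amgm _ _)); try (apply: rpredM; apply: ger0_real => //; exact: ltW).
have -> : a * b * (a * b * (U + V)) = a ^+ 2 * (b ^+ 2 * U) + a ^+ 2 * (b ^+ 2 * V) by ring.
rewrite !exprMn ha hb; apply: lerD.
  rewrite [X in _ <= X]mulrCA; apply: ler_wpM2l => //; exact: ler0n.
apply: ler_wpM2l => //; exact: ler0n.
Qed.

Theorem mainTheorem7 (C : numClosedFieldType) (M Na Nb nx ne : nat)
  (A : 'M[C]_(M, Na)) (B : 'M[C]_(M, Nb))
  (hx : 'cV[C]_Na) (he : 'cV[C]_Nb) :
  unit_cols A -> unit_cols B ->
  (1 <= nx)%N -> (1 <= ne)%N ->
  (nnz hx <= nx)%N -> (nnz he <= ne)%N ->
  let g := Num.max (coh_self A * (nx%:R - 1)) (coh_self B * (ne%:R - 1))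
           + sqrtC ((nx * ne)%:R) * coh_mut A B in
  let h := col_mx hx he in
  let D := row_mx A B in
  (1 - g) * sqnorm h <= sqnorm (D *m h) /\ sqnorm (D *m h) <= (1 + g) * sqnorm h.
Proof.
move=> hA hB hnx hne hu hv g h D.
set U := sqnorm hx; set V := sqnorm he.
have hy : sqnorm h = U + V.
  rewrite /sqnorm /h big_split_ord /=; congr (_ + _); apply: eq_bigr => i _.
    by rewrite col_mxEu.
  by rewrite col_mxEd.
have ex : sqnorm (D *m h) =
   \sum_(i < M) ((A *m hx) i 0)^* * (A *m hx) i 0 +
   \sum_(i < M) ((B *m he) i 0)^* * (B *m he) i 0 +
   (\sum_(i < M) ((A *m hx) i 0)^* * (B *m he) i 0 +
    (\sum_(i < M) ((A *m hx) i 0)^* * (B *m he) i 0)^*).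
  rewrite sqnormE /D /h mul_row_col rmorph_sum -!big_split /=; apply: eq_bigr => i _.
  rewrite [(A *m hx + B *m he) i 0]mxE rmorphD [in X in _ + (_ + X)]rmorphM /= conjCK; ring.
rewrite !gram in ex.
set Gaa := \sum_(k < Na) _ in ex; set Gbb := \sum_(k < Nb) _ in ex.
set Gab := \sum_(k < Na) _ in ex.
set x := sqnorm (D *m h) in ex *.
rewrite hy.
have xr : x \is Num.real by apply: ger0_real; exact: sqnorm_ge0.
have yr : U + V \is Num.real by apply: ger0_real; rewrite addr_ge0 // sqnorm_ge0.
have U0 : 0 <= U by exact: sqnorm_ge0.
have V0 : 0 <= V by exact: sqnorm_ge0.
have key : `|x - (U + V)| <= g * (U + V).
  have -> : x - (U + V) = (Gaa - U) + (Gbb - V) + (Gab + Gab^*) by rewrite ex; ring.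
  apply: (le_trans (ler_normD _ _)).
  have h3 : `|Gab + Gab^*| <= 2%:R * `|Gab|.
    by apply: (le_trans (ler_normD _ _)); rewrite norm_conjC mulr2n mulrDl mul1r lexx.
  have h1 := block hA hu; have h2 := block hB hv.
  have h4 := cross A B hx he.
  set ma := coh_self A * (nx%:R - 1); set mb := coh_self B * (ne%:R - 1).
  have ma0 : 0 <= ma by rewrite mulr_ge0 ?coh_self_ge0 // subr_ge0 ler1n.
  have mb0 : 0 <= mb by rewrite mulr_ge0 ?coh_self_ge0 // subr_ge0 ler1n.
  have hPx : absum hx ^+ 2 <= nx%:R * U.
    by apply: (le_trans (cs hx)); apply: ler_wpM2r => //; rewrite ler_nat.
  have hPe : absum he ^+ 2 <= ne%:R * V.
    by apply: (le_trans (cs he)); apply: ler_wpM2r => //; rewrite ler_nat.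
  have hpq := pq hnx hne (absum_ge0 hx) (absum_ge0 he) U0 V0 hPx hPe.
  rewrite -/Gaa -/U -/ma in h1; rewrite -/Gbb -/V -/mb in h2; rewrite -/Gab in h4.
  set mm := coh_mut A B in h4 hpq *.
  set P := absum hx in h4 hpq *; set Q := absum he in h4 hpq *.
  apply: (@le_trans _ _ ((ma * U + mb * V) + mm * (2%:R * (P * Q)))).
    apply: lerD; first exact: (le_trans (ler_normD _ _) (lerD h1 h2)).
    apply: (le_trans h3); rewrite [X in _ <= X]mulrCA; apply: ler_wpM2l; [exact: ler0n | exact: h4].
  have mr : ma \is Num.real by exact: ger0_real.
  have mbr : mb \is Num.real by exact: ger0_real.
  apply: (@le_trans _ _ (Num.max ma mb * (U + V) + mm * (sqrtC ((nx * ne)%:R) * (U + V)))).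
    apply: lerD; last by apply: ler_wpM2l => //; exact: coh_mut_ge0.
    rewrite mulrDr; apply: lerD.
      by apply: ler_wpM2r => //; exact: max_l.
    by apply: ler_wpM2r => //; exact: max_r.
  by rewrite /g /ma /mb /mm le_eqVlt; apply/orP; left; apply/eqP; ring.
have d1 : x - (U + V) <= g * (U + V) := le_trans (real_ler_norm (rpredB xr yr)) key.
have d2 : (U + V) - x <= g * (U + V).
  by rewrite distrC in key; exact: le_trans (real_ler_norm (rpredB yr xr)) key.
split; rewrite -subr_ge0.
  have -> : x - (1 - g) * (U + V) = g * (U + V) - ((U + V) - x) by ring.
  by rewrite subr_ge0.
have -> : (1 + g) * (U + V) - x = g * (U + V) - (x - (U + V)) by ring.
by rewrite subr_ge0.
Qed.
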